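(* Let $d\ge0$, $0\le n\le d+1$, and $x=e_1z^n\in V_d$. Let $\mu_x\colon V_d\to(\mathfrak g_d^x)^\vee$ be the moment map for the stabilizer $\mathfrak g_d^x$, $\mu_x(v)(\xi)=\frac12(\xi v,v)_{V_d}$. Then the reduced scheme of its zero fibre is $$(\mu_x^{-1}(0))_{\mathrm{red}}=z^{\lfloor\frac{n-1}{2}\rfloor+1}\mathbb C[z]e_1+z^{\lfloor\frac d2\rfloor+1}V_d.$$ In particular, if $d\in\{0,1\}$ and $n=0$, then $\mu_x^{-1}(0)$ has codimension $1$ in $V_d$; otherwise it has codimension $\ge2$.
   Context: $T=\mathbb C^2=\mathbb C\langle e_1,e_2\rangle$ with standard symplectic form $(\,,\,)_T$ and standard $\mathfrak{sl}_2$-action. $V_d=T\otimes\mathbb C[z]/(z^{d+1})$, $\mathfrak g_d=\mathfrak{sl}_2\otimes\mathbb C[z]/(z^{d+1})$ acting by $(\xi z^a)(vz^b)=(\xi v)z^{a+b}$; $\mathfrak g_d^x$ is the stabilizer of $x$ in $\mathfrak g_d$. The symplectic form on $V_d$ is $(f,g)_{V_d}=\mathrm{Res}_{z=0}(f,g)_{T[z]}/z^{d+1}$, with $(\,,\,)_{T[z]}$ the $\mathbb C[z]$-bilinear extension of $(\,,\,)_T$. Subsets such as $z^m\mathbb C[z]e_1$ are understood modulo $z^{d+1}$, as subspaces of $V_d$. *)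

(* Defs.v *)
From HB Require Import structures.
From mathcomp Require Import all_boot all_order all_algebra.
Set Implicit Arguments. Unset Strict Implicit. Unset Printing Implicit Defensive.
Import Order.TTheory GRing.Theory Num.Theory.
Local Open Scope ring_scope.

(* C is an algebraically closed field of characteristic 0 (any
   numClosedFieldType, e.g. the complex numbers).  An element of
   T[z] = C[z]^2 = C[z] e_1 + C[z] e_2 is a column vector 'cV[{poly C}]_2
   (row 0 = e_1-coordinate, row 1 = e_2-coordinate).
   V_d = T (x) C[z]/(z^{d+1}) is modelled by the vectors all of whose entries
   have size <= d+1 (i.e. degree <= d); reduction modulo z^{d+1} is truncation
   take_poly d.+1.  g_d = sl_2 (x) C[z]/(z^{d+1}) is modelled by trace-zero
   2x2 matrices over {poly C} with entries of degree <= d. *)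

Section Model.
Variable C : numClosedFieldType.

Definition e1 : 'cV[{poly C}]_2 := delta_mx ord0 ord0.

Definition truncV (d : nat) (v : 'cV[{poly C}]_2) : 'cV[{poly C}]_2 :=
  map_mx (take_poly d.+1) v.

Definition inVd (d : nat) (v : 'cV[{poly C}]_2) : bool :=
  [forall i, (size (v i ord0) <= d.+1)%N].

Definition inGd (d : nat) (xi : 'M[{poly C}]_2) : bool :=
  (\tr xi == 0) && [forall i, [forall j, (size (xi i j) <= d.+1)%N]].

Definition actd (d : nat) (xi : 'M[{poly C}]_2) (v : 'cV[{poly C}]_2) :=
  truncV d (xi *m v).

Definition formT (f g : 'cV[{poly C}]_2) : {poly C} :=
  f ord0 ord0 * g ord_max ord0 - f ord_max ord0 * g ord0 ord0.

(* (f,g)_{V_d} = Res_{z=0} (f,g)_{T[z]} / z^{d+1} = coefficient of z^d *)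
Definition formV (d : nat) (f g : 'cV[{poly C}]_2) : C := (formT f g)`_d.

(* v lies in the zero fibre of mu_x : V_d -> (g_d^x)^vee,
   mu_x(v)(xi) = 1/2 (xi v, v)_{V_d}, for xi in the stabilizer g_d^x *)
Definition mu_zero (d : nat) (x v : 'cV[{poly C}]_2) : Prop :=
  forall xi : 'M[{poly C}]_2, inGd d xi -> actd d xi x = 0 ->
    2^-1 * formV d (actd d xi v) v = 0.

Definition Wsub (d a b : nat) (v : 'cV[{poly C}]_2) : Prop :=
  exists (p : {poly C}) (q : 'cV[{poly C}]_2),
    v = truncV d ('X^a *: (p *: e1) + 'X^b *: q).

Definition coords (d : nat) (v : 'cV[{poly C}]_2) : 'M[C]_(2, d.+1) :=
  \matrix_(i < 2, k < d.+1) (v i ord0)`_k.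

End Model.

(* Main.v *)
Require Import Defs.
From HB Require Import structures.
From mathcomp Require Import all_boot all_order all_algebra.
From mathcomp Require Import ring lra zify.
Import Order.TTheory GRing.Theory Num.Theory.
Local Open Scope ring_scope.

Section Aux.
Variable C : numClosedFieldType.
Implicit Types p q : {poly C}.

Definition lowz (k : nat) p := forall i, (i < k)%N -> p`_i = 0.

Lemma lowz_mono k l p : (l <= k)%N -> lowz k p -> lowz l p.
Proof. by move=> lk h i il; apply: h; apply: leq_trans lk. Qed.

Lemma lowz_mul k l p q : lowz k p -> lowz l q -> lowz (k + l) (p * q).
Proof.
move=> hp hq i il; rewrite coefM big1 // => j _.
have [jk|kj] := ltnP j k; first by rewrite hp // mul0r.
have jl := ltn_ord j; rewrite hq ?mulr0 //; lia.
Qed.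

Lemma coefM_zero p q d :
  (forall j, (j <= d)%N -> p`_j = 0 \/ q`_(d - j) = 0) -> (p * q)`_d = 0.
Proof.
move=> h; rewrite coefM big1 // => j _.
have := ltn_ord j; rewrite ltnS => /h [->|->]; by rewrite ?mul0r ?mulr0.
Qed.

Lemma coef_takeM d p q : (take_poly d.+1 p * q)`_d = (p * q)`_d.
Proof.
rewrite !coefM; apply: eq_bigr => j _; by rewrite coef_take_poly ltn_ord.
Qed.

Lemma take_lowz m p : lowz m p -> take_poly m p = 0.
Proof.
move=> h; apply/polyP => i; rewrite coef_take_poly coef0.
by case: ifP => // /h.
Qed.

Lemma lowz_sq m p : (forall j, (j < m)%N -> (p * p)`_j = 0) -> lowz (m.+1 %/ 2) p.
Proof.
move=> h i; elim/ltn_ind: i => i IH im.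
have lw : lowz i p by move=> l li; apply: IH => //; lia.
have ep := poly_take_drop i p.
rewrite (@take_lowz i p lw) add0r in ep.
set q := drop_poly i p in ep.
have i2 : (i + i < m)%N by move: im; lia.
have H := h (i + i)%N i2.
rewrite -ep mulrACA -exprD coefMXn ltnn subnn coefM big_ord1 subnn in H.
rewrite -ep coefMXn ltnn subnn.
by apply/eqP; rewrite -[_ == 0]orbb -mulf_eq0; apply/eqP.
Qed.


Notation i1 := (@ord_max 1).

Lemma split2 (i : 'I_2) : i = ord0 \/ i = i1.
Proof.
case: i => [[|[|m]]] Hi; first by left; apply/val_inj.
  by right; apply/val_inj.
by [].
Qed.

Lemma mulmx2 (xi : 'M[{poly C}]_2) (v : 'cV[{poly C}]_2) i k :
  (xi *m v) i k = xi i ord0 * v ord0 k + xi i i1 * v i1 k.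
Proof.
have e : widen_ord (m:=2) (leqnSn 1) ord0 = ord0 by apply/val_inj.
by rewrite mxE big_ord_recr big_ord1 /= e.
Qed.

Lemma tr2 (xi : 'M[{poly C}]_2) : \tr xi = xi ord0 ord0 + xi i1 i1.
Proof.
have e : widen_ord (m:=2) (leqnSn 1) ord0 = ord0 by apply/val_inj.
by rewrite /mxtrace big_ord_recr big_ord1 /= e.
Qed.

Lemma truncE d (v : 'cV[{poly C}]_2) i j : truncV d v i j = take_poly d.+1 (v i j).
Proof. by rewrite mxE. Qed.

Lemma formV_act d xi (v : 'cV[{poly C}]_2) :
  formV d (actd d xi v) v =
  (xi ord0 ord0 * (v ord0 ord0 * v i1 ord0) + xi ord0 i1 * (v i1 ord0 * v i1 ord0)
   - xi i1 ord0 * (v ord0 ord0 * v ord0 ord0) - xi i1 i1 * (v i1 ord0 * v ord0 ord0))`_d.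
Proof.
rewrite /formV /formT /actd !truncE !mulmx2 coefB !coef_takeM -coefB.
apply: (congr1 (fun p : {poly C} => p`_d)); ring.
Qed.

Lemma x00 d n k : truncV d ('X^n *: e1 C) ord0 k = take_poly d.+1 'X^n.
Proof. by rewrite (ord1 k) /truncV /e1 !mxE /= mulr1. Qed.

Lemma x10 d n k : truncV d ('X^n *: e1 C) i1 k = 0.
Proof. by rewrite (ord1 k) /truncV /e1 !mxE /= mulr0 take_poly0r. Qed.


Lemma stab_coef d n xi i j :
  actd d xi (truncV d ('X^n *: e1 C)) = 0 -> (j + n <= d)%N -> (xi i ord0)`_j = 0.
Proof.
move=> /matrixP/(_ i ord0); rewrite /actd truncE mulmx2 x00 x10 mulr0 addr0 mxE.
move=> /polyP/(_ (j + n)%N); rewrite coef_take_poly coef0 => H jn.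
move: H; rewrite ltnS jn take_poly_id ?size_polyXn; last by lia.
by rewrite coefMXn ltnNge leq_addl /= addnK.
Qed.

Lemma term_zero d n p q :
  (forall j, (j + n <= d)%N -> p`_j = 0) -> lowz n q -> (p * q)`_d = 0.
Proof.
move=> hp hq; apply: coefM_zero => j jd.
have [jn|jn] := leqP (j + n) d; first by left; apply: hp.
by right; apply: hq; lia.
Qed.

Definition mk2 (p00 p01 p10 p11 : {poly C}) : 'M[{poly C}]_2 :=
  \matrix_(i, j) if i == ord0 then (if j == ord0 then p00 else p01)
                 else (if j == ord0 then p10 else p11).

Lemma mk2E p00 p01 p10 p11 :
  [/\ mk2 p00 p01 p10 p11 ord0 ord0 = p00, mk2 p00 p01 p10 p11 ord0 i1 = p01,
      mk2 p00 p01 p10 p11 i1 ord0 = p10 & mk2 p00 p01 p10 p11 i1 i1 = p11].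
Proof. by rewrite !mxE. Qed.


Lemma mk2_Gd d p q : (size p <= d.+1)%N -> (size q <= d.+1)%N -> inGd d (mk2 0 p q 0).
Proof.
move=> hp hq; rewrite /inGd tr2; have [-> _ _ ->] := mk2E 0 p q 0.
rewrite addr0 eqxx /=; apply/forallP => i; apply/forallP => j; rewrite mxE.
by case: ifP => _; case: ifP => _; rewrite ?size_poly0.
Qed.

Lemma mk2_act d n p q :
  lowz d.+1 (q * take_poly d.+1 'X^n) ->
  actd d (mk2 0 p q 0) (truncV d ('X^n *: e1 C)) = 0.
Proof.
move=> hq; apply/matrixP => i k; rewrite /actd truncE mulmx2 x10 mulr0 addr0 x00 [RHS]mxE.
have [->|->] := split2 i; rewrite mxE /=.
  by rewrite mul0r take_poly0r.
exact: take_lowz.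
Qed.

Lemma lowzX j : lowz j ('X^j : {poly C}).
Proof. by move=> i ij; rewrite coefXn; case: eqP => // e; lia. Qed.

Lemma lowz_take m n : lowz n (take_poly m ('X^n : {poly C})).
Proof. move=> i ij; rewrite coef_take_poly coefXn; case: ifP => //; case: eqP => // e; lia. Qed.

Lemma lowz_XtX d n k : (k < n)%N -> (n <= d.+1)%N ->
  lowz d.+1 ('X^(d - k) * take_poly d.+1 ('X^n : {poly C})).
Proof.
move=> kn nd; apply: (@lowz_mono (d - k + n)); first by lia.
exact: lowz_mul (lowzX _) (lowz_take _ _).
Qed.

Lemma two_ne0 : (2 : C) != 0. Proof. by rewrite pnatr_eq0. Qed.

Lemma mu_iff d n (v : 'cV[{poly C}]_2) : (n <= d.+1)%N ->
  mu_zero d (truncV d ('X^n *: e1 C)) v <->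
  (lowz (n.+1 %/ 2) (v ord0 ord0) /\ lowz (d %/ 2 + 1) (v i1 ord0)).
Proof.
move=> nd; set a := v ord0 ord0; set b := v i1 ord0; split.
  move=> mu.
  have key : forall xi, inGd d xi -> actd d xi (truncV d ('X^n *: e1 C)) = 0 ->
      formV d (actd d xi v) v = 0.
    move=> xi h1 h2; have := mu xi h1 h2; move/eqP; rewrite mulf_eq0 invr_eq0.
    by rewrite (negbTE two_ne0) /= => /eqP.
  split.
    apply: lowz_sq => k kn.
    have jd : (d - k <= d)%N by lia.
    have := key (mk2 0 0 'X^(d - k) 0).
    rewrite mk2_Gd ?size_poly0 ?size_polyXn //.
    rewrite mk2_act; last exact: lowz_XtX.
    move=> /(_ isT erefl); rewrite formV_act; have [-> -> -> ->] := mk2E 0 0 'X^(d - k) 0.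
    rewrite !mul0r add0r sub0r subr0 coefN coefXnM ltnNge leq_subr /= subKn; last by lia.
    by move/eqP; rewrite oppr_eq0 => /eqP.
  have -> : (d %/ 2 + 1 = d.+2 %/ 2)%N by lia.
  apply: lowz_sq => k kn.
  have jd : (d - k <= d)%N by lia.
  have := key (mk2 0 'X^(d - k) 0 0).
  rewrite mk2_Gd ?size_poly0 ?size_polyXn //.
  rewrite mk2_act; last by move=> i _; rewrite mul0r coef0.
  move=> /(_ isT erefl); rewrite formV_act; have [-> -> -> ->] := mk2E 0 'X^(d - k) 0 0.
  rewrite !mul0r add0r !subr0 coefXnM ltnNge leq_subr /= subKn //; lia.
move=> [la lb] xi /andP[/eqP tr _] st.
have st0 := fun j => @stab_coef d n xi ord0 j st; have st1 := fun j => @stab_coef d n xi i1 j st.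
have e11 : xi i1 i1 = - xi ord0 ord0 by apply/eqP; rewrite -addr_eq0 addrC -tr2 tr.
apply/eqP; rewrite mulf_eq0 invr_eq0 (negbTE two_ne0) /=; apply/eqP.
rewrite formV_act -/a -/b e11 !coefB coefD mulNr coefN.
have lab : lowz n (a * b) by apply: (@lowz_mono (n.+1 %/ 2 + (d %/ 2 + 1))); [lia|exact: lowz_mul].
have laa : lowz n (a * a) by apply: (@lowz_mono (n.+1 %/ 2 + n.+1 %/ 2)); [lia|exact: lowz_mul].
have lbb : lowz d.+1 (b * b) by apply: (@lowz_mono (d %/ 2 + 1 + (d %/ 2 + 1))); [lia|exact: lowz_mul].
rewrite (@term_zero d n _ _ st0 lab) (@term_zero d n _ _ st1 laa) [b * a]mulrC (@term_zero d n _ _ st0 lab).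
rewrite (@term_zero d d.+1 _ _ _ lbb); last by move=> j; lia.
by rewrite !(oppr0, subr0, addr0).
Qed.


Lemma lowz_drop k p : lowz k p -> 'X^k * drop_poly k p = p.
Proof.
move=> h; have e := poly_take_drop k p; rewrite (@take_lowz k p h) add0r in e.
by rewrite mulrC.
Qed.

Lemma Wsub_iff d A B (v : 'cV[{poly C}]_2) : (A <= B)%N -> inVd d v ->
  Wsub d A B v <-> (lowz A (v ord0 ord0) /\ lowz B (v i1 ord0)).
Proof.
move=> AB /forallP vd; split.
  move=> [p [q ->]]; rewrite !truncE !mxE /=.
  split => i iA; rewrite coef_take_poly; case: ifP => // _; rewrite ?coefD !coefXnM.
    by rewrite iA (leq_trans iA AB) addr0.
  by rewrite iA mulr0 coef0 if_same addr0.
move=> [la lb]; exists (drop_poly A (v ord0 ord0)), (drop_poly B (v i1 ord0) *: delta_mx i1 ord0).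
apply/matrixP => i k; rewrite (ord1 k) truncE !mxE.
have [->|->] := split2 i => /=.
  rewrite mulr1 mulr0 mulr0 addr0 lowz_drop // take_poly_id //; exact: vd.
rewrite mulr0 mulr0 mulr1 add0r lowz_drop // take_poly_id //; exact: vd.
Qed.

End Aux.

Section Proj.
Variables (C : numClosedFieldType) (d A B : nat).
Hypotheses (hA : (A <= d.+1)%N) (hB : (B <= d.+1)%N).
Local Notation i1 := (@ord_max 1).

Definition hproj (M : 'M[C]_(2, d.+1)) : 'rV[C]_(A + B) :=
  \row_(t < A + B) (if (t < A)%N then M ord0 (insubd ord0 (t : nat))
                    else M i1 (insubd ord0 (t - A)%N)).

Fact hproj_lin : linear hproj.
Proof. by move=> c M N; apply/rowP => t; rewrite !mxE; case: ifP. Qed.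

HB.instance Definition _ := GRing.isLinear.Build C _ _ _ hproj hproj_lin.

Definition Uv : {vspace 'M[C]_(2, d.+1)} := lker (linfun hproj).

Lemma Uv_mem M : (M \in Uv) =
  [forall t : 'I_(A + B), if (t < A)%N then M ord0 (insubd ord0 (t : nat)) == 0
                    else M i1 (insubd ord0 (t - A)%N) == 0].
Proof.
rewrite memv_ker lfunE /=; apply/eqP/forallP => [/rowP h t|h].
  by have := h t; rewrite !mxE; case: ifP => _ ->.
by apply/rowP => t; have := h t; rewrite !mxE; case: ifP => _ /eqP.
Qed.

Lemma img_full : (limg (linfun hproj) = fullv)%VS.
Proof.
apply/eqP; rewrite eqEsubv subvf /=; apply/subvP => w _.
pose M : 'M[C]_(2, d.+1) := \matrix_(i, k)
  (if i == ord0 then \sum_(t < A + B | ((t : nat) == k) && (k < A)%N) w ord0 t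
   else \sum_(t < A + B | ((t : nat) == A + k)%N && (k < B)%N) w ord0 t).
apply/memv_imgP; exists M; first exact: memvf.
rewrite lfunE /=; apply/rowP => t; rewrite !mxE /=.
case: ifP => tA.
  rewrite (big_pred1 t) // => s /=; rewrite val_insubd.
  have ->: (t < d.+1)%N by lia.
  by rewrite tA andbT; apply/eqP/eqP => [/val_inj|->].
have tAB := ltn_ord t.
rewrite (big_pred1 t) // => s /=; rewrite val_insubd.
have ->: (t - A < d.+1)%N by lia.
have ->: (t - A < B)%N by lia.
rewrite andbT subnKC; last by lia.
by apply/eqP/eqP => [/val_inj|->].
Qed.

Lemma dim_Uv : \dim Uv = (2 * d.+1 - (A + B))%N.
Proof.
have := limg_ker_dim (linfun hproj) fullv.
rewrite capfv img_full !dimvf.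
have -> : dim 'rV[C]_(A + B) = (1 * (A + B))%N by [].
have -> : dim 'M[C]_(2, d.+1) = (2 * d.+1)%N by [].
by rewrite /Uv => h; rewrite -h mul1n addnK.
Qed.

End Proj.

Lemma coords_Uv (C : numClosedFieldType) d A B (v : 'cV[{poly C}]_2) :
  (A <= d.+1)%N -> (B <= d.+1)%N ->
  (coords d v \in Uv C d A B) <-> (@lowz C A (v ord0 ord0) /\ @lowz C B (v ord_max ord0)).
Proof.
move=> hA hB; rewrite Uv_mem; split.
  move=> /forallP h; split => i iA.
    have iAB : (i < A + B)%N by lia.
    have := h (Ordinal iAB); rewrite /= iA mxE val_insubd.
    have ->: (i < d.+1)%N by lia.
    by move/eqP.
  have iAB : (A + i < A + B)%N by lia.
  have := h (Ordinal iAB); rewrite /= ltnNge leq_addr /= mxE val_insubd addKn.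
  have ->: (i < d.+1)%N by lia.
    by move/eqP.
move=> [la lb]; apply/forallP => t; have tAB := ltn_ord t.
case: ifP => tA; rewrite mxE val_insubd.
  have ->: (t < d.+1)%N by lia.
  by rewrite la.
have ->: (t - A < d.+1)%N by lia.
rewrite lb //; lia.
Qed.

Theorem proposition3p7 (C : numClosedFieldType) (d n : nat) :
  (n <= d.+1)%N ->
  let x : 'cV[{poly C}]_2 := truncV d ('X^n *: e1 C) in
  (forall v : 'cV[{poly C}]_2, inVd d v ->
     (mu_zero d x v <-> Wsub d (n.+1 %/ 2) (d %/ 2 + 1) v)) /\
  (exists U : {vspace 'M[C]_(2, d.+1)},
     (forall v : 'cV[{poly C}]_2, inVd d v ->
        (mu_zero d x v <-> coords d v \in U)) /\
     (if (d <= 1)%N && (n == 0%N)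
      then (2 * d.+1 - \dim U)%N = 1%N
      else (2 <= 2 * d.+1 - \dim U)%N)).
Proof.
move=> nd x.
have hA : (n.+1 %/ 2 <= d.+1)%N by lia.
have hB : (d %/ 2 + 1 <= d.+1)%N by lia.
have AB : (n.+1 %/ 2 <= d %/ 2 + 1)%N by lia.
split.
  move=> v vd; apply: (iff_trans (@mu_iff C d n v nd)); apply: iff_sym; exact: (@Wsub_iff C d _ _ v AB vd).
exists (Uv C d (n.+1 %/ 2) (d %/ 2 + 1)); split.
  move=> v vd; apply: (iff_trans (@mu_iff C d n v nd)); apply: iff_sym; exact: (@coords_Uv C d _ _ v hA hB).
rewrite dim_Uv //; case: ifP => [/andP[d1 /eqP n0]|h]; first by lia.
move/negbT: h; rewrite negb_and => h.
have : (1 < d \/ 0 < n)%N by case/orP: h; [rewrite -ltnNge; left|move=> /eqP ?; right; lia].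
lia.
Qed.
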